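(* Let $f=\frac1n\sum_{i=1}^n f_i$ where each $f_i:\mathbb{R}^d\to\mathbb{R}$ is differentiable, bounded from below by $f_i^{\mathrm{inf}}$, and $L_i$-smooth in the sense that $f_i(y)\le f_i(x)+\langle\nabla f_i(x),y-x\rangle+\frac{L_i}{2}\|y-x\|^2$ for all $x,y$. Let $f^{\mathrm{inf}}=\inf_x f(x)$ and $\Delta^{\mathrm{inf}}=\frac1n\sum_{i=1}^n (f^{\mathrm{inf}}-f_i^{\mathrm{inf}})$. Let $v=(v_1,\dots,v_n)$ be a random vector with $\mathbb{E}[v_i]=1$ and $\mathbb{E}[v_i^2]<\infty$ for all $i$, and define $g(x)=\frac1n\sum_{i=1}^n v_i\nabla f_i(x)$. Then $\Delta^{\mathrm{inf}}\ge 0$ and for all $x\in\mathbb{R}^d$, $$\mathbb{E}\|g(x)\|^2\le 2A\,(f(x)-f^{\mathrm{inf}})+B\|\nabla f(x)\|^2+C$$ with $A=\max_i L_i\mathbb{E}[v_i^2]$, $B=0$, $C=2A\Delta^{\mathrm{inf}}$. *)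

(* Defs.v *)
From HB Require Import structures.
From mathcomp Require Import all_boot all_order all_algebra.
From mathcomp Require Import all_classical all_reals all_analysis.
Set Implicit Arguments. Unset Strict Implicit. Unset Printing Implicit Defensive.
Import Order.TTheory GRing.Theory Num.Theory.
Import numFieldNormedType.Exports.
Local Open Scope ring_scope.

Definition dotp (R : realType) (d : nat) (u w : 'rV[R]_d) : R :=
  \sum_(j < d) u 0 j * w 0 j.
Definition sqnorm (R : realType) (d : nat) (u : 'rV[R]_d) : R := dotp u u.

Definition grad (R : realType) (d : nat) (h : 'rV[R]_d -> R) (x : 'rV[R]_d)
  : 'rV[R]_d := \row_(j < d) ('D_(delta_mx 0 j) h x).

Definition Lsmooth (R : realType) (d : nat) (L : R) (h : 'rV[R]_d -> R) :=
  forall x y, h y <= h x + dotp (grad h x) (y - x) + L / 2 * sqnorm (y - x).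

Definition finf (R : realType) (d : nat) (h : 'rV[R]_d -> R) : R :=
  inf (range h).

(* Main.v *)
Require Import Defs.
From HB Require Import structures.
From mathcomp Require Import all_boot all_order all_algebra.
From mathcomp Require Import all_classical all_reals all_analysis.
From mathcomp Require Import ring lra measurable_realfun.
Import Order.TTheory GRing.Theory Num.Theory.
Import numFieldNormedType.Exports.
Local Open Scope ring_scope.

Lemma jensen_sq (R : realType) n (hn : (0 < n)%N) (b : 'I_n -> R) :
  (n%:R^-1 * \sum_i b i) ^+ 2 <= n%:R^-1 * \sum_i b i ^+ 2.
Proof.
set m := n%:R^-1 * \sum_i b i.
have H : 0 <= \sum_i (b i - m) ^+ 2.
  by apply: sumr_ge0 => i _; exact: sqr_ge0.
have E : \sum_i (b i - m) ^+ 2 =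
   \sum_i b i ^+ 2 - 2 * m * \sum_i b i + n%:R * m ^+ 2.
  under eq_bigr => i _ do rewrite sqrrB.
  rewrite !big_split /= sumrN sumr_const card_ord mulr_natl.
  by rewrite sumrMnl -mulr_suml; ring.
have n0 : (n%:R : R) != 0 by rewrite pnatr_eq0 -lt0n.
have Sm : \sum_i b i = n%:R * m by rewrite /m mulrA divff // mul1r.
rewrite E Sm in H.
have np : (0 : R) < n%:R by rewrite ltr0n.
clearbody m.
rewrite -(ler_pM2l np).
have -> : n%:R * (n%:R^-1 * \sum_i b i ^+ 2) = \sum_i b i ^+ 2 :> R by field.
nra.
Qed.

Lemma sqnorm_avg (R : realType) d n (hn : (0 < n)%N) (a : 'I_n -> R)
  (G : 'I_n -> 'rV[R]_d) :
  sqnorm (n%:R^-1 *: \sum_i (a i *: G i)) <=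
  n%:R^-1 * \sum_i (a i ^+ 2 * sqnorm (G i)).
Proof.
rewrite /sqnorm /dotp.
under eq_bigr => j _ do rewrite !mxE summxE -expr2.
apply: le_trans (_ : \sum_j n%:R^-1 * \sum_i (a i * G i 0 j) ^+ 2 <= _).
  apply: ler_sum => j _.
  under eq_bigr => i _ do rewrite mxE.
  exact: jensen_sq.
rewrite -mulr_sumr exchange_big /=; rewrite le_eqVlt; apply/orP; left; apply/eqP; congr (_ * _).
apply: eq_bigr => i _; rewrite mulr_sumr; apply: eq_bigr => j _.
by rewrite exprMn expr2.
Qed.

Lemma quadA (R : realType) (m c s L : R) :
  (forall t, m <= c - t * s + L / 2 * t ^+ 2 * s) -> 0 < s ->
  s <= 2 * L * (c - m).
Proof.
move=> H sp.
have cm : m <= c by have := H 0; rewrite !(mul0r, expr0n, mulr0, subr0, addr0).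
have [Lp|Ln] := ltP 0 L.
  have := H L^-1.
  have -> : c - L^-1 * s + L / 2 * L^-1 ^+ 2 * s = c - s / (2 * L).
    by field; rewrite lt0r_neq0.
  move=> h.
  have : s / (2 * L) <= c - m by lra.
  by rewrite ler_pdivrMr ?mulr_gt0 // mulrC.
have := H ((c - m + 1) / s).
have -> : c - (c - m + 1) / s * s = m - 1 by field; rewrite lt0r_neq0.
have : L / 2 * ((c - m + 1) / s) ^+ 2 * s <= 0.
  rewrite -mulrA; apply: mulr_le0_ge0; first by lra.
  by apply: mulr_ge0; [exact: sqr_ge0 | exact: ltW].
lra.
Qed.

Lemma quadB (R : realType) (m c L : R) :
  (forall t, m <= c + L / 2 * t ^+ 2) -> m <= c -> 0 <= L.
Proof.
move=> H cm; rewrite leNgt; apply/negP => Ln.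
pose t := 1 + 2 * (c - m) / (- L).
have t1 : 1 <= t.
  rewrite /t lerDl; apply: divr_ge0; [lra|lra].
have tt : t <= t ^+ 2 by rewrite expr2 ler_peMl //; lra.
have Lt : L / 2 * t = L / 2 - (c - m) by rewrite /t; field; rewrite ltr0_neq0.
have := H t.
have : L / 2 * t ^+ 2 <= L / 2 * t by rewrite ler_wnM2l //; lra.
lra.
Qed.

Lemma dotpZr (R : realType) d (u w : 'rV[R]_d) t : dotp u (t *: w) = t * dotp u w.
Proof. by rewrite /dotp mulr_sumr; apply: eq_bigr => j _; rewrite mxE; ring. Qed.

Lemma sqnormZ (R : realType) d (w : 'rV[R]_d) t : sqnorm (t *: w) = t ^+ 2 * sqnorm w.
Proof. by rewrite /sqnorm /dotp mulr_sumr; apply: eq_bigr => j _; rewrite mxE; ring. Qed.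

Lemma sqnorm_ge0 (R : realType) d (w : 'rV[R]_d) : 0 <= sqnorm w.
Proof. by apply: sumr_ge0 => j _; rewrite -expr2 sqr_ge0. Qed.

Lemma grad_bound (R : realType) d (L : R) (h : 'rV[R]_d -> R) :
  Lsmooth L h -> has_lbound (range h) -> forall x,
  finf h <= h x /\ sqnorm (grad h x) <= 2 * L * (h x - finf h).
Proof.
move=> hs hb x.
have hm : forall y, finf h <= h y by move=> y; apply: ge_inf => //; exists y.
split; first exact: hm.
set G := grad h x; set m := finf h.
have key : forall u t, m <= h x + t * dotp G u + L / 2 * t ^+ 2 * sqnorm u.
  move=> u t; apply: le_trans (hm (x + t *: u)) _.
  have := hs x (x + t *: u).
  by rewrite (addrC x) addrK dotpZr sqnormZ mulrA.
have [sp|] := ltP 0 (sqnorm G).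
  apply: quadA => // t; have := key (- G) t.
  have -> : dotp G (- G) = - sqnorm G.
    by rewrite -scaleN1r dotpZr mulN1r.
  have -> : sqnorm (- G) = sqnorm G by rewrite -scaleN1r sqnormZ sqrrN expr1n mul1r.
  by rewrite mulrN.
move=> s0; have s0' : sqnorm G = 0 by apply/eqP; rewrite eq_le s0 sqnorm_ge0.
rewrite s0'.
have cm : 0 <= h x - m by rewrite subr_ge0 hm.
have [Lp|Ln] := leP 0 L; first by rewrite mulr_ge0 // mulr_ge0.
have [d0|dp] := posnP d.
  subst d.
  have -> : h x - m = 0.
    apply/eqP; rewrite subr_eq0 eq_le hm andbT.
    apply: lb_le_inf; first by exists (h x), x.
    move=> _ [y _ <-]; have := hs y x.
    by rewrite /dotp /sqnorm /dotp !big_ord0 mulr0 !addr0.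
  by rewrite mulr0.
exfalso.
pose j0 : 'I_d := Ordinal dp.
pose e : 'rV[R]_d := delta_mx 0 j0.
have G0 : G 0 j0 * G 0 j0 = 0.
  apply: (psumr_eq0P _ s0') => // j _; by rewrite -expr2 sqr_ge0.
have Ge : dotp G e = 0.
  rewrite /dotp (bigD1 j0) //= big1 ?addr0.
    rewrite /e [delta_mx _ _ _ _]mxE !eqxx mulr1; by move/eqP: G0; rewrite mulf_eq0 orbb => /eqP.
  by move=> j /negbTE jn; rewrite /e [delta_mx _ _ _ _]mxE jn andbF mulr0.
have e1 : sqnorm e = 1.
  rewrite /sqnorm /dotp (bigD1 j0) //= big1 ?addr0.
    by rewrite /e [delta_mx _ _ _ _]mxE !eqxx mulr1.
  by move=> j /negbTE jn; rewrite /e [delta_mx _ _ _ _]mxE jn andbF mulr0.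
have := @quadB R m (h x) L.
have H : forall t, m <= h x + L / 2 * t ^+ 2.
  by move=> t; have := key e t; rewrite Ge e1 mulr0 addr0 mulr1.
move=> /(_ H (hm x)); lra.
Qed.

Section Main.
Local Open Scope ereal_scope.
Lemma E_lin (R : realType) n (dm : measure_display) (Omega : measurableType dm)
  (P : probability Omega R) (v : 'I_n -> {RV P >-> R})
  (hsecond : forall i, ('E_P[fun w => (v i w ^+ 2)%R] < +oo)%E)
  (c : 'I_n -> R) (c0 : forall i, (0 <= c i)%R) :
  'E_P[fun w => n%:R^-1 * \sum_i (v i w ^+ 2 * c i)]%R =
  (n%:R^-1 * \sum_i (c i * fine 'E_P[fun w => (v i w ^+ 2)%R]))%:E.
Proof.
have mv : forall i, measurable_fun setT (fun w => (v i w ^+ 2)%R).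
  by move=> i; apply: measurable_funX.
have Ei i : 'E_P[fun w => (v i w ^+ 2)%R] = (fine 'E_P[fun w => (v i w ^+ 2)%R])%:E.
  rewrite fineK // ge0_fin_numE ?hsecond //.
  by apply: expectation_ge0 => w; exact: sqr_ge0.
rewrite EFinM -sumEFin.
under [in RHS]eq_bigr => i _ do rewrite EFinM -Ei.
rewrite unlock.
under eq_integral => w _ do rewrite EFinM -sumEFin.
have mt : forall i, measurable_fun setT (fun w => (v i w ^+ 2 * c i)%:E).
  move=> i; apply/measurable_EFinP.
  by apply: measurable_funM => //; exact: measurable_cst.
have mS : measurable_fun setT (fun w => \sum_i (v i w ^+ 2 * c i)%:E).
  exact: emeasurable_sum.
have S0 : forall w, setT w -> 0 <= \sum_i (v i w ^+ 2 * c i)%:E.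
  by move=> w _; apply: sume_ge0 => i _; rewrite lee_fin mulr_ge0 // sqr_ge0.
have n0 : 0 <= (n%:R^-1 : R)%:E by rewrite lee_fin invr_ge0.
rewrite ge0_integralZl //.
congr (_ * _).
have T0 : forall i w, setT w -> 0 <= (v i w ^+ 2 * c i)%:E.
  by move=> i w _; rewrite lee_fin mulr_ge0 // sqr_ge0.
rewrite ge0_integral_sum //.
apply: eq_bigr => i _.
under eq_integral => w _ do rewrite mulrC EFinM.
rewrite ge0_integralZl //.
- by apply/measurable_EFinP.
- by move=> w _; rewrite lee_fin sqr_ge0.
- by rewrite lee_fin.
Qed.
End Main.

Theorem proposition2 (R : realType) (d n : nat) (hn : (0 < n)%N)
  (fi : 'I_n -> 'rV[R]_d -> R) (L : 'I_n -> R)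
  (hdiff : forall i x, differentiable (fi i) x)
  (hbdd : forall i, has_lbound (range (fi i)))
  (hsmooth : forall i, Lsmooth (L i) (fi i))
  (dm : measure_display) (Omega : measurableType dm) (P : probability Omega R)
  (v : 'I_n -> {RV P >-> R})
  (hmean : forall i, ('E_P[v i] = 1)%E)
  (hsecond : forall i, ('E_P[fun w => (v i w ^+ 2)%R] < +oo)%E)
  (A : R)
  (hAmax : (forall i, L i * fine 'E_P[fun w => (v i w ^+ 2)%R] <= A) /\
           exists i, A = L i * fine 'E_P[fun w => (v i w ^+ 2)%R]) :
  let f := fun x => n%:R^-1 * \sum_(i < n) fi i x in
  let Delta := n%:R^-1 * \sum_(i < n) (finf f - finf (fi i)) in
  let g := fun w x => n%:R^-1 *: \sum_(i < n) (v i w *: grad (fi i) x) in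
  let B : R := 0 in
  let C := 2 * A * Delta in
  0 <= Delta /\
  forall x : 'rV[R]_d,
    ('E_P[fun w => sqnorm (g w x)] <=
      (2 * A * (f x - finf f) + B * sqnorm (grad f x) + C)%:E)%E.
Proof.
move=> f Delta g B C.
have gb := fun i x => @grad_bound R d (L i) (fi i) (hsmooth i) (hbdd i) x.
have n0 : (n%:R : R) != 0 by rewrite pnatr_eq0 -lt0n.
have np : (0 : R) < n%:R by rewrite ltr0n.
have ni : (0 : R) <= n%:R^-1 by rewrite invr_ge0 ltW.
have flb : forall x, n%:R^-1 * \sum_i finf (fi i) <= f x.
  move=> x; rewrite /f; apply: ler_wpM2l => //.
  by apply: ler_sum => i _; exact: (gb i x).1.
have fge : n%:R^-1 * \sum_i finf (fi i) <= finf f.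
  apply: lb_le_inf; first by exists (f 0), 0.
  by move=> _ [y _ <-]; exact: flb.
have DeltaE : Delta = finf f - n%:R^-1 * \sum_i finf (fi i).
  rewrite /Delta sumrB sumr_const card_ord mulrBr; congr (_ - _).
  by rewrite -mulr_natl; field.
split; first by rewrite DeltaE subr_ge0.
move=> x.
set e := fun i => fine 'E_P[fun w => (v i w ^+ 2)%R].
have e0 : forall i, 0 <= e i.
  by move=> i; apply: fine_ge0; apply: expectation_ge0 => w; exact: sqr_ge0.
set q := fun i => sqnorm (grad (fi i) x).
have q0 : forall i, 0 <= q i by move=> i; exact: sqnorm_ge0.
have mg : measurable_fun setT (fun w => sqnorm (g w x)).
  have -> : (fun w => sqnorm (g w x)) = fun w =>
      \sum_j (n%:R^-1 * \sum_i (v i w * grad (fi i) x 0 j)) ^+ 2.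
    apply: funext => w; rewrite /sqnorm /dotp; apply: eq_bigr => j _.
    rewrite -expr2 !mxE summxE; congr ((_ * _) ^+ 2); apply: eq_bigr => i _.
    by rewrite [LHS]mxE.
  apply: measurable_sum => j; apply: measurable_funX.
  apply: measurable_funM; first exact: measurable_cst.
  apply: measurable_sum => i; apply: measurable_funM => //.
have step1 : ('E_P[fun w => sqnorm (g w x)] <=
              'E_P[fun w => (n%:R^-1 * \sum_i (v i w ^+ 2 * q i))%R])%E.
  apply: expectation_le => //.
  - apply: measurable_funM; first exact: measurable_cst.
    apply: measurable_sum => i; apply: measurable_funM; last exact: measurable_cst.
    by apply: measurable_funX.
  - by move=> w; exact: sqnorm_ge0.
  - by move=> w; apply: mulr_ge0 => //; apply: sumr_ge0 => i _; rewrite mulr_ge0 // sqr_ge0.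
  - by apply: aeW => w; exact: sqnorm_avg.
apply: (le_trans step1); rewrite (@E_lin R n dm Omega P v hsecond q q0) lee_fin.
rewrite /B mul0r addr0 /C DeltaE.
have -> : 2 * A * (f x - finf f) + 2 * A * (finf f - n%:R^-1 * \sum_i finf (fi i))
   = n%:R^-1 * \sum_i (2 * A * (fi i x - finf (fi i))).
  rewrite -mulr_sumr sumrB /f; field.
  by [].
apply: ler_wpM2l => //; apply: ler_sum => i _.
have [hi1 hi2] := gb i x.
have := hAmax.1 i; rewrite -/(e i) => hA.
have := e0 i; rewrite -/(q i) in hi2 *; move=> hei.
have c0 : 0 <= fi i x - finf (fi i) by rewrite subr_ge0.
nra.
Qed.
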